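(* Fix a $C^0$-concept over a topologized field $\mathbb{K}$. Let $E,F\in\mathcal{M}$, $U\subseteq E$ open, $f\colon U\to F$ a map and $k\in\mathbb{N}_0\cup\{\infty\}$. If there is an open cover $(U_i)_{i\in I}$ of $U$ such that $f|_{U_i}\colon U_i\to F$ is of class $C^k$ for each $i\in I$, then $f$ is of class $C^k$.
   Context: Let $\mathbb{K}$ be a commutative ring with unit (here a field) carrying a topology. A $C^0$-concept over $\mathbb{K}$ consists of: (a) a class $\mathcal{M}$ of topologized $\mathbb{K}$-modules with $\mathbb{K}\in\mathcal{M}$; (b) for $E,F\in\mathcal{M}$ and open $U\subseteq E$, a set $C^0(U,F)$ of continuous maps; (c) for $E_1,E_2\in\mathcal{M}$ a topology on $E_1\times E_2$ (not necessarily the product topology) making it a member of $\mathcal{M}$; subject to: (I.1) composites of $C^0$-maps are $C^0$, identities and inclusions of open subsets are $C^0$; (I.2) $x\mapsto rx+b$ is $C^0$; (I.3) $t\mapsto tv+x$ is $C^0$; (I.4) $\mathbb{K}^\times$ is open and inversion is $C^0$; (I.5) a map whose restrictions to the members of an open cover of its domain are $C^0$ is $C^0$; (II.1) projections and $v\mapsto(v,y)$, $w\mapsto(x,w)$ are $C^0$; (II.2) $f_1\times f_2$ is $C^0$ for $C^0$-maps $f_i$; (II.3) diagonals are $C^0$; (II.4) exchange/associativity maps of products are $C^0$ both ways; (II.5) addition and scalar multiplication are $C^0$; (III) a $C^0$-map on open $U\subseteq\mathbb{K}$ is determined by its values on $U\cap\mathbb{K}^\times$. For open $V\subseteq X$,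 $V^{[1]}=\{(x,v,t)\in V\times X\times\mathbb{K}:x+tv\in V\}$; a $C^0$-map $g$ is $C^1$ if there is a $C^0$-map $g^{[1]}$ on $V^{[1]}$ with $g(x+tv)-g(x)=t\,g^{[1]}(x,v,t)$; recursively $g$ is $C^{k+1}$ if $C^k$ and $g^{[k]}$ is $C^1$, $g^{[k+1]}=(g^{[k]})^{[1]}$ on $V^{[k+1]}=(V^{[k]})^{[1]}$; $C^\infty$ = $C^k$ for all $k$. *)

(* Defs.v *)
From HB Require Import structures.
From mathcomp Require Import all_boot all_order all_algebra.
From mathcomp Require Import boolp classical_sets.
Unset Printing Implicit Defensive.
Import GRing.Theory.
Local Open Scope ring_scope.
Local Open Scope classical_set_scope.

Definition is_topology (T : Type) (op : set (set T)) : Prop :=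
  [/\ op setT, op set0,
      (forall A B, op A -> op B -> op (A `&` B)) &
      (forall (I : Type) (F : I -> set T), (forall i, op (F i)) ->
         op (\bigcup_i F i))].

Record TMod (K : fieldType) := TModule {
  tcar : lmodType K;
  topen : set (set tcar) }.
Arguments TModule {K}.
Arguments topen {K} _ _.
Arguments tcar {K} _.

(** The raw data of a C^0-concept over K:
    - [inM]  : the class M of topologized K-modules;
    - [ptop] : the chosen topology on E1 x E2 (not necessarily the product one);
    - [C0 E F U f] : "f|_U belongs to C^0(U,F)".  Maps U -> F are represented
      by total functions E -> F; only their values on U matter (axiom C0_ext). *)
Record C0data (K : fieldType) := C0Data {
  inM : TMod K -> Prop;
  ptop : forall A B : TMod K, set (set (tcar A * tcar B)%type);
  C0 : forall A B : TMod K, set (tcar A) -> (tcar A -> tcar B) -> Prop }.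

Arguments inM {K} c _.
Arguments ptop {K} c A B _.
Arguments C0 {K} c A B _ _.

Section Concept.
Variables (K : fieldType) (tauK : set (set K)) (D : C0data K).

Definition Kobj : TMod K := TModule (K^o)%type tauK.

Definition tprod (A B : TMod K) : TMod K :=
  TModule (tcar A * tcar B)%type (ptop D A B).

(** Continuity of f|_U : U -> F for the subspace topology on U. *)
Definition cont_on (A B : TMod K) (U : set (tcar A)) (f : tcar A -> tcar B) :=
  forall W, topen B W -> exists O, topen A O /\ O `&` U = U `&` f @^-1` W.

Record C0concept : Prop := {
  M_top : forall A, inM D A -> is_topology _ (topen A);
  M_K : inM D Kobj;
  M_prod : forall A B, inM D A -> inM D B -> inM D (tprod A B);
  C0_cont : forall A B U f, inM D A -> inM D B -> topen A U ->
     C0 D A B U f -> cont_on A B U f;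
  C0_ext : forall A B U f g, inM D A -> inM D B -> topen A U ->
     C0 D A B U f -> (forall x, U x -> f x = g x) -> C0 D A B U g;
  C0_comp : forall A B C U V f g, inM D A -> inM D B -> inM D C ->
     topen A U -> topen B V -> (forall x, U x -> V (f x)) ->
     C0 D A B U f -> C0 D B C V g -> C0 D A C U (g \o f);
  C0_id : forall A U, inM D A -> topen A U -> C0 D A A U id;
  C0_affine : forall A (r : K) (b : tcar A), inM D A ->
     C0 D A A setT (fun x => r *: x + b);
  C0_line : forall A (v x : tcar A), inM D A ->
     C0 D Kobj A setT (fun t : K^o => t *: v + x);
  units_open : topen Kobj [set t : K^o | t != 0];
  C0_inv : C0 D Kobj Kobj [set t : K^o | t != 0] (fun t : K^o => (t : K)^-1);
  C0_local : forall A B (U : set (tcar A)) f (I : Type) (Ui : I -> set (tcar A)),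
     inM D A -> inM D B -> topen A U -> (forall i, topen A (Ui i)) ->
     \bigcup_i Ui i = U -> (forall i, C0 D A B (Ui i) f) -> C0 D A B U f;
  C0_fst : forall A B, inM D A -> inM D B ->
     C0 D (tprod A B) A setT (fun p => p.1);
  C0_snd : forall A B, inM D A -> inM D B ->
     C0 D (tprod A B) B setT (fun p => p.2);
  C0_pairl : forall A B (y : tcar B), inM D A -> inM D B ->
     C0 D A (tprod A B) setT (fun v => (v, y));
  C0_pairr : forall A B (x : tcar A), inM D A -> inM D B ->
     C0 D B (tprod A B) setT (fun w => (x, w));
  C0_prodmap : forall A1 A2 B1 B2 U1 U2 f1 f2,
     inM D A1 -> inM D A2 -> inM D B1 -> inM D B2 ->
     topen A1 U1 -> topen A2 U2 -> C0 D A1 B1 U1 f1 -> C0 D A2 B2 U2 f2 ->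
     C0 D (tprod A1 A2) (tprod B1 B2) [set p | U1 p.1 /\ U2 p.2]
        (fun p => (f1 p.1, f2 p.2));
  C0_diag : forall A, inM D A -> C0 D A (tprod A A) setT (fun x => (x, x));
  C0_swap : forall A B, inM D A -> inM D B ->
     C0 D (tprod A B) (tprod B A) setT (fun p => (p.2, p.1));
  C0_assoc : forall A B C, inM D A -> inM D B -> inM D C ->
     C0 D (tprod (tprod A B) C) (tprod A (tprod B C)) setT
        (fun p => (p.1.1, (p.1.2, p.2)));
  C0_assocV : forall A B C, inM D A -> inM D B -> inM D C ->
     C0 D (tprod A (tprod B C)) (tprod (tprod A B) C) setT
        (fun p => ((p.1, p.2.1), p.2.2));
  C0_add : forall A, inM D A -> C0 D (tprod A A) A setT (fun p => p.1 + p.2);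
  C0_scale : forall A, inM D A ->
     C0 D (tprod Kobj A) A setT (fun p => (p.1 : K) *: p.2);
  C0_unique : forall B (U : set K^o) f g, inM D B -> topen Kobj U ->
     C0 D Kobj B U f -> C0 D Kobj B U g ->
     (forall t, U t -> t != 0 -> f t = g t) -> forall t, U t -> f t = g t }.

Fixpoint itM (A : TMod K) (k : nat) : TMod K :=
  match k with
  | 0 => A
  | k.+1 => tprod (tprod (itM A k) (itM A k)) Kobj
  end.

Fixpoint itV (A : TMod K) (V : set (tcar A)) (k : nat) : set (tcar (itM A k)) :=
  match k return set (tcar (itM A k)) with
  | 0 => V
  | k.+1 => fun p => itV A V k p.1.1 /\ itV A V k (p.1.1 + (p.2 : K) *: p.1.2)
  end.

Definition isCk (A B : TMod K) (V : set (tcar A)) (g : tcar A -> tcar B)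
    (k : nat) : Prop :=
  exists gs : forall j : nat, tcar (itM A j) -> tcar B,
    [/\ (forall x, V x -> gs 0%N x = g x),
        (forall j, (j <= k)%N -> C0 D (itM A j) B (itV A V j) (gs j)) &
        (forall j, (j < k)%N -> forall p : tcar (itM A j.+1), itV A V j.+1 p ->
           gs j (p.1.1 + (p.2 : K) *: p.1.2) - gs j p.1.1
             = (p.2 : K) *: gs j.+1 p)].

End Concept.

Inductive ext_nat := Fin of nat | Infty.

Definition isC (K : fieldType) (tauK : set (set K)) (D : C0data K)
    (A B : TMod K) (V : set (tcar A)) (g : tcar A -> tcar B) (k : ext_nat) :=
  match k with
  | Fin n => isCk K tauK D A B V g n
  | Infty => forall n, isCk K tauK D A B V g n
  end.

(* Main.v *)
Require Import Defs.
From HB Require Import structures.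
From mathcomp Require Import all_boot all_order all_algebra.
From mathcomp Require Import boolp classical_sets.
From mathcomp Require Import ring.
Import GRing.Theory.
Local Open Scope ring_scope.
Local Open Scope classical_set_scope.

Arguments M_top {K tauK D} c {A} _.
Arguments M_K {K tauK D} c.
Arguments M_prod {K tauK D} c {A B} _ _.
Arguments C0_cont {K tauK D} c {A B U f} _ _ _ _ _ _.
Arguments C0_ext {K tauK D} c {A B U f g} _ _ _ _ _.
Arguments C0_comp {K tauK D} c {A B C U V f g} _ _ _ _ _ _ _ _.
Arguments C0_id {K tauK D} c {A U} _ _.
Arguments C0_affine {K tauK D} c {A} r b _.
Arguments units_open {K tauK D} c.
Arguments C0_inv {K tauK D} c.
Arguments C0_local {K tauK D} c {A B U f I Ui} _ _ _ _ _ _.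
Arguments C0_fst {K tauK D} c {A B} _ _.
Arguments C0_snd {K tauK D} c {A B} _ _.
Arguments C0_pairl {K tauK D} c {A B} y _ _.
Arguments C0_pairr {K tauK D} c {A B} x _ _.
Arguments C0_prodmap {K tauK D} c {A1 A2 B1 B2 U1 U2 f1 f2} _ _ _ _ _ _ _ _.
Arguments C0_diag {K tauK D} c {A} _.
Arguments C0_add {K tauK D} c {A} _.
Arguments C0_scale {K tauK D} c {A} _.
Arguments C0_unique {K tauK D} c {B U f g} _ _ _ _ _ t _.

Section Calc.
Variables (K : fieldType) (tauK : set (set K)) (D : C0data K).
Hypothesis HD : C0concept K tauK D.
Local Notation KK := (Kobj K tauK).
Local Notation tp := (tprod K D).

Definition PM (A : TMod K) : TMod K := tp (tp A A) KK.
Definition PV (A : TMod K) (V : set (tcar A)) : set (tcar (PM A)) :=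
  itV K tauK D A V 1.

Lemma inM_tp {A B} : inM D A -> inM D B -> inM D (tp A B).
Proof. move=> ha hb; exact: (M_prod HD ha hb). Qed.
Lemma inM_K : inM D KK.
Proof. exact: M_K HD. Qed.
Lemma inM_PM {A} : inM D A -> inM D (PM A).
Proof. move=> h; apply: inM_tp; [apply: inM_tp|]; auto using inM_K. Qed.
Lemma inM_it {A} j : inM D A -> inM D (itM K tauK D A j).
Proof. move=> h; elim: j => [|j IH] //=; exact: inM_PM. Qed.
Hint Resolve inM_tp inM_K inM_PM inM_it : core.

Lemma topT {A} : inM D A -> topen A setT.
Proof. by move=> h; case: (M_top HD h). Qed.
Lemma topI {A U V} : inM D A -> topen A U -> topen A V -> topen A (U `&` V).
Proof. by move=> h; case: (M_top HD h) => _ _ hI _; apply: hI. Qed.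
Hint Resolve topT : core.

Lemma C0_restr {A B V V' f} : inM D A -> inM D B -> topen A V -> topen A V' ->
  V' `<=` V -> C0 D A B V f -> C0 D A B V' f.
Proof.
move=> hA hB hV hV' sub hf.
have := C0_comp HD hA hA hB hV' hV sub (C0_id HD hA hV') hf.
exact.
Qed.

Lemma preim_open {A B U W f} : inM D A -> inM D B -> topen A U -> topen B W ->
  C0 D A B U f -> topen A (U `&` f @^-1` W).
Proof.
move=> hA hB hU hW hf.
have [O [hO e]] := C0_cont HD hA hB hU hf W hW.
rewrite -e; exact: topI.
Qed.

Lemma C0_compT {A B C U f g} : inM D A -> inM D B -> inM D C -> topen A U ->
  C0 D A B U f -> C0 D B C setT g -> C0 D A C U (fun x => g (f x)).
Proof.
move=> hA hB hC hU hf hg.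
have := C0_comp HD hA hB hC hU (topT hB) (fun _ _ => I) hf hg. exact.
Qed.

Lemma C0_pair {A B1 B2 V h1 h2} : inM D A -> inM D B1 -> inM D B2 -> topen A V ->
  C0 D A B1 V h1 -> C0 D A B2 V h2 -> C0 D A (tp B1 B2) V (fun x => (h1 x, h2 x)).
Proof.
move=> hA hB1 hB2 hV c1 c2.
have e : [set p : tcar (tp A A) | V p.1 /\ V p.2] =
   (setT `&` (fun p : tcar (tp A A) => p.1) @^-1` V) `&`
   (setT `&` (fun p : tcar (tp A A) => p.2) @^-1` V).
  by apply/seteqP; split => p /=; [case=> q1 q2 | case=> [[_ q1] [_ q2]]].
have hS : topen (tp A A) [set p : tcar (tp A A) | V p.1 /\ V p.2].
  rewrite e; apply: topI; auto; apply: preim_open; auto.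
    exact (C0_fst HD hA hA).
  exact (C0_snd HD hA hA).
have pm := C0_prodmap HD hA hA hB1 hB2 hV hV c1 c2.
have dg := C0_restr hA (inM_tp hA hA) (topT hA) hV (fun _ _ => I) (C0_diag HD hA).
have := C0_comp HD (A := A) (B := tp A A) (f := fun x : tcar A => ((x, x) : tcar (tp A A))) hA (inM_tp hA hA) (inM_tp hB1 hB2) hV hS
  (fun x (hx : V x) => conj hx hx) dg pm.
exact.
Qed.

Lemma C0_pi11 {A} : inM D A -> C0 D (PM A) A setT (fun p => p.1.1).
Proof.
move=> hA; have := C0_compT (inM_PM hA) (inM_tp hA hA) hA (topT (inM_PM hA))
  (C0_fst HD (inM_tp hA hA) inM_K) (C0_fst HD hA hA). exact.
Qed.
Lemma C0_pi12 {A} : inM D A -> C0 D (PM A) A setT (fun p => p.1.2).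
Proof.
move=> hA; have := C0_compT (inM_PM hA) (inM_tp hA hA) hA (topT (inM_PM hA))
  (C0_fst HD (inM_tp hA hA) inM_K) (C0_snd HD hA hA). exact.
Qed.
Lemma C0_pi2 {A} : inM D A -> C0 D (PM A) KK setT (fun p => p.2).
Proof. move=> hA; exact (C0_snd HD (inM_tp hA hA) inM_K). Qed.

Lemma C0_a {A} : inM D A -> C0 D (PM A) A setT (fun p => p.1.1 + (p.2 : K) *: p.1.2).
Proof.
move=> hA.
have hP := inM_PM hA.
have s := C0_compT hP (inM_tp inM_K hA) hA (topT hP)
  (C0_pair hP inM_K hA (topT hP) (C0_pi2 hA) (C0_pi12 hA)) (C0_scale HD hA).
have := C0_compT hP (inM_tp hA hA) hA (topT hP)
  (C0_pair hP hA hA (topT hP) (C0_pi11 hA) s) (C0_add HD hA).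
exact.
Qed.

Lemma PV_open {A V} : inM D A -> topen A V -> topen (PM A) (PV A V).
Proof.
move=> hA hV.
have -> : PV A V = (setT `&` (fun p : tcar (PM A) => p.1.1) @^-1` V) `&`
   (setT `&` (fun p : tcar (PM A) => p.1.1 + (p.2 : K) *: p.1.2) @^-1` V).
  by apply/seteqP; split => p /=; [case=> q1 q2 | case=> [[_ q1] [_ q2]]].
apply: topI; auto; apply: preim_open; auto.
  exact: C0_pi11.
exact: C0_a.
Qed.

Lemma itV_open A V j : inM D A -> topen A V -> topen (itM K tauK D A j) (itV K tauK D A V j).
Proof.
move=> hA hV; elim: j => [|j IH] //=.
exact: (PV_open (inM_it j hA) IH).
Qed.

Fixpoint CkR (A B : TMod K) (V : set (tcar A)) (g : tcar A -> tcar B) (k : nat)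
  {struct k} : Prop :=
  match k with
  | 0 => C0 D A B V g
  | k'.+1 => C0 D A B V g /\ exists g1 : tcar (PM A) -> tcar B,
      (forall p : tcar (PM A), PV A V p ->
         g (p.1.1 + (p.2 : K) *: p.1.2) - g p.1.1 = (p.2 : K) *: g1 p) /\
      CkR (PM A) B (PV A V) g1 k'
  end.

Lemma CkR_C0 {A B V g} k : CkR A B V g k -> C0 D A B V g.
Proof. by case: k => [|k] //= []. Qed.

Lemma CkR_down {k A B V g} : CkR A B V g k.+1 -> CkR A B V g k.
Proof.
elim: k A B V g => [|k IH] A B V g.
  by case.
move=> [c [g1 [i h]]]; split => //; exists g1; split => //; exact: IH.
Qed.

Lemma CkR_ext k : forall A B V f g, inM D A -> inM D B -> topen A V ->
  (forall x, V x -> f x = g x) -> CkR A B V f k -> CkR A B V g k.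
Proof.
case: k => [|k] A B V f g hA hB hV e.
  by move=> c; exact (C0_ext HD hA hB hV c e).
move=> [c [g1 [i h]]]; split; first exact (C0_ext HD hA hB hV c e).
exists g1; split => // p hp.
have [h1 h2] : V p.1.1 /\ V (p.1.1 + (p.2 : K) *: p.1.2) := hp.
by rewrite -!e //; apply: i.
Qed.

Definition islin {A B : TMod K} (L : tcar A -> tcar B) :=
  forall x y (t : K), L (x + t *: y) = L x + t *: L y.

Lemma pair_eq (A B : TMod K) (x y : tcar (tp A B)) : x.1 = y.1 -> x.2 = y.2 -> x = y.
Proof. by case: x; case: y => /= ? ? ? ? -> ->. Qed.

Lemma CkR_lin k : forall A B V L, inM D A -> inM D B -> topen A V ->
  islin L -> C0 D A B setT L -> CkR A B V L k.
Proof.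
elim: k => [|k IH] A B V L hA hB hV hL cL.
  exact: C0_restr hA hB (topT hA) hV (fun _ _ => I) cL.
split; first exact: C0_restr hA hB (topT hA) hV (fun _ _ => I) cL.
exists (fun p => L p.1.2); split.
  by move=> p _; rewrite hL addrAC subrr add0r.
apply: IH => //; auto.
- exact: PV_open.
- by move=> x y t; exact: hL.
- exact: C0_compT (inM_PM hA) hA hB (topT (inM_PM hA)) (C0_pi12 hA) cL.
Qed.

Lemma CkR_pair k : forall A B1 B2 V h1 h2, inM D A -> inM D B1 -> inM D B2 ->
  topen A V -> CkR A B1 V h1 k -> CkR A B2 V h2 k ->
  CkR A (tp B1 B2) V (fun x => (h1 x, h2 x)) k.
Proof.
elim: k => [|k IH] A B1 B2 V h1 h2 hA hB1 hB2 hV.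
  exact: C0_pair.
move=> [c1 [g1 [i1 r1]]] [c2 [g2 [i2 r2]]]; split.
  exact: C0_pair.
exists (fun p => (g1 p, g2 p)); split.
  by move=> p hp; apply: pair_eq; [exact: i1 | exact: i2].
apply: IH => //; auto; exact: PV_open.
Qed.

Lemma CkR_comp k : forall A B C V W h g, inM D A -> inM D B -> inM D C ->
  topen A V -> topen B W -> (forall x, V x -> W (h x)) ->
  CkR A B V h k -> CkR B C W g k -> CkR A C V (fun x => g (h x)) k.
Proof.
elim: k => [|k IH] A B C V W h g hA hB hC hV hW hVW.
  move=> ch cg; have := C0_comp HD hA hB hC hV hW hVW ch cg; exact.
move=> hk [cg [g1 [ig rg]]].
have hk' := CkR_down hk.
case: hk => ch [h1 [ih rh]].
split; first by have := C0_comp HD hA hB hC hV hW hVW ch cg; exact.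
have key : forall p, PV A V p ->
  h (p.1.1 + (p.2 : K) *: p.1.2) = h p.1.1 + (p.2 : K) *: h1 p /\
  PV B W ((h p.1.1, h1 p), p.2).
  move=> p hp; have [hx hxv] : V p.1.1 /\ V (p.1.1 + (p.2 : K) *: p.1.2) := hp.
  have e : h (p.1.1 + (p.2 : K) *: p.1.2) = h p.1.1 + (p.2 : K) *: h1 p.
    by rewrite -ih // [RHS]addrC subrK.
  split => //; split => /=; first exact: hVW.
  by rewrite -e; apply: hVW.
exists (fun p => g1 ((h p.1.1, h1 p), p.2)); split.
  move=> p hp; have [e hq] := key p hp.
  rewrite e; exact: (ig _ hq).
have hP := inM_PM hA.
apply: (IH (PM A) (PM B) C (PV A V) (PV B W) (fun p => ((h p.1.1, h1 p), p.2)) g1) => //; auto.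
- exact: PV_open.
- exact: PV_open.
- by move=> p hp; case: (key p hp).
- have hPVo := PV_open hA hV.
  have c11 : CkR (PM A) B (PV A V) (fun p => h p.1.1) k.
    apply: (IH (PM A) A B (PV A V) V (fun p => p.1.1) h) => //.
    * by move=> p [].
    * exact (CkR_lin k _ _ _ _ hP hA hPVo (fun _ _ _ => erefl) (C0_pi11 hA)).
  have c2 : CkR (PM A) KK (PV A V) (fun p => p.2) k.
    exact (CkR_lin k _ _ _ _ hP inM_K hPVo (fun _ _ _ => erefl) (C0_pi2 hA)).
  exact (CkR_pair k _ _ _ _ _ _ hP (inM_tp hB hB) inM_K hPVo
     (CkR_pair k _ _ _ _ _ _ hP hB hB hPVo c11 rh) c2).
Qed.


Lemma CkR_add k {A B V f g} : inM D A -> inM D B -> topen A V ->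
  CkR A B V f k -> CkR A B V g k -> CkR A B V (fun x => f x + g x) k.
Proof.
move=> hA hB hV cf cg.
have hBB := inM_tp hB hB.
have := CkR_comp k _ _ _ _ setT _ (fun p : tcar (tp B B) => p.1 + p.2) hA hBB hB hV
  (topT hBB) (fun _ _ => I) (CkR_pair k _ _ _ _ _ _ hA hB hB hV cf cg).
apply; apply: CkR_lin => //; auto; last exact (C0_add HD hB).
move=> x y t.
have -> : (x + t *: y).1 = x.1 + t *: y.1 by [].
have -> : (x + t *: y).2 = x.2 + t *: y.2 by [].
by rewrite scalerDr addrACA.
Qed.

Lemma CkR_lincomp k {A B C V f} (L : tcar B -> tcar C) : inM D A -> inM D B -> inM D C ->
  topen A V -> islin L -> C0 D B C setT L ->
  CkR A B V f k -> CkR A C V (fun x => L (f x)) k.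
Proof.
move=> hA hB hC hV hL cL cf.
apply: (CkR_comp k _ _ _ _ setT _ L hA hB hC hV (topT hB) (fun _ _ => I) cf).
exact (CkR_lin k _ _ _ _ hB hC (topT hB) hL cL).
Qed.

Lemma C0_neg {B} : inM D B -> C0 D B B setT (fun x => - x).
Proof.
move=> hB.
have c := C0_affine HD (-1) 0 hB.
refine (C0_ext HD hB hB (topT hB) c _) => x _.
by rewrite addr0 scaleN1r.
Qed.

Lemma CkR_neg k {A B V f} : inM D A -> inM D B -> topen A V ->
  CkR A B V f k -> CkR A B V (fun x => - f x) k.
Proof.
move=> hA hB hV cf; apply: CkR_lincomp => //; last exact: C0_neg.
by move=> x y t; rewrite opprD scalerN.
Qed.

Definition msc (B : TMod K) : tcar (tp KK B) -> tcar B := fun p => (p.1 : K) *: p.2.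

Lemma scale_key (B : lmodType K) (a b s : K) (x y : B) :
  (a + s * b) *: (x + s *: y) - a *: x = s *: (b *: x + a *: y + s *: (b *: y)).
Proof.
rewrite !scalerDr !scalerDl !scalerA.
rewrite addrAC [a *: x + _]addrC addrK -scalerDl.
rewrite -addrA -scalerDl.
congr (_ *: _ + _ *: _); ring.
Qed.

Lemma CkR_scale k : forall B V, inM D B -> topen (tp KK B) V -> CkR (tp KK B) B V (msc B) k.
Proof.
elim: k => [|k IH] B V hB hV.
  exact: C0_restr (inM_tp inM_K hB) hB (topT (inM_tp inM_K hB)) hV (fun _ _ => I) (C0_scale HD hB).
have hKB := inM_tp inM_K hB.
have hP := inM_PM hKB.
split; first exact: C0_restr hKB hB (topT hKB) hV (fun _ _ => I) (C0_scale HD hB).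
exists (fun q : tcar (PM (tp KK B)) =>
   msc B (q.1.2.1, q.1.1.2) + msc B (q.1.1.1, q.1.2.2) + msc B (q.2, msc B (q.1.2.1, q.1.2.2))).
split.
  Time move=> q _; exact: scale_key.
have hPV : topen _ (PV (tp KK B) V) := PV_open hKB hV.
have lin : forall (L : tcar (PM (tp KK B)) -> tcar (tp KK B)), islin L ->
    C0 D _ _ setT L -> CkR (PM (tp KK B)) B (PV (tp KK B) V) (fun q => msc B (L q)) k.
  move=> L hL cL.
  apply: (CkR_comp k _ _ _ _ setT _ (msc B) hP hKB hB hPV (topT hKB) (fun _ _ => I)).
    exact (CkR_lin k _ _ _ _ hP hKB hPV hL cL).
  exact (IH B setT hB (topT hKB)).
have c11 : C0 D _ KK setT (fun q : tcar (PM (tp KK B)) => q.1.1.1).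
  have := C0_compT hP hKB inM_K (topT hP) (C0_pi11 hKB) (C0_fst HD inM_K hB); exact.
have c12 : C0 D _ B setT (fun q : tcar (PM (tp KK B)) => q.1.1.2).
  have := C0_compT hP hKB hB (topT hP) (C0_pi11 hKB) (C0_snd HD inM_K hB); exact.
have c21 : C0 D _ KK setT (fun q : tcar (PM (tp KK B)) => q.1.2.1).
  have := C0_compT hP hKB inM_K (topT hP) (C0_pi12 hKB) (C0_fst HD inM_K hB); exact.
have c22 : C0 D _ B setT (fun q : tcar (PM (tp KK B)) => q.1.2.2).
  have := C0_compT hP hKB hB (topT hP) (C0_pi12 hKB) (C0_snd HD inM_K hB); exact.
Time have t1 := lin (fun q => (q.1.2.1, q.1.1.2)) (fun _ _ _ => erefl)
  (C0_pair hP inM_K hB (topT hP) c21 c12).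
Time have t2 := lin (fun q => (q.1.1.1, q.1.2.2)) (fun _ _ _ => erefl)
  (C0_pair hP inM_K hB (topT hP) c11 c22).
have c2 : CkR (PM (tp KK B)) KK (PV (tp KK B) V) (fun q => q.2) k :=
  CkR_lin k _ _ _ _ hP inM_K hPV (fun _ _ _ => erefl) (C0_pi2 hKB).
Time have c3 := lin (fun q => (q.1.2.1, q.1.2.2)) (fun _ _ _ => erefl)
  (C0_pair hP inM_K hB (topT hP) c21 c22).
Time have t3 := CkR_comp k _ _ _ _ setT _ (msc B) hP hKB hB hPV (topT hKB) (fun _ _ => I)
  (CkR_pair k _ _ _ _ _ _ hP inM_K hB hPV c2 c3) (IH B setT hB (topT hKB)).
Time exact (CkR_add k hP hB hPV (CkR_add k hP hB hPV t1 t2) t3).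
Qed.

Lemma CkR_scaleC k {A B V a f} : inM D A -> inM D B -> topen A V ->
  CkR A KK V a k -> CkR A B V f k -> CkR A B V (fun x => (a x : K) *: f x) k.
Proof.
move=> hA hB hV ca cf.
have hKB := inM_tp inM_K hB.
have := CkR_comp k _ _ _ _ setT _ (msc B) hA hKB hB hV (topT hKB) (fun _ _ => I)
  (CkR_pair k _ _ _ _ _ _ hA inM_K hB hV ca cf) (CkR_scale k _ _ hB (topT hKB)).
exact.
Qed.


Lemma inv_key (t s v : K) : t != 0 -> t + s * v != 0 ->
  (t + s * v)^-1 - t^-1 = s * - (v * (t^-1 * (t + s * v)^-1)).
Proof. move=> h1 h2; field; by apply/andP. Qed.

Definition V0 : set (tcar KK) := [set t : K^o | t != 0].
Definition iota (t : tcar KK) : tcar KK := ((t : K)^-1 : K^o).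

Lemma CkR_inv k : CkR KK KK V0 iota k.
Proof.
elim: k => [|k IH].
  exact (C0_inv HD).
split; first exact (C0_inv HD).
have hP := inM_PM inM_K.
have hPV : topen (PM KK) (PV KK V0) := PV_open inM_K (units_open HD).
exists (fun q : tcar (PM KK) =>
  - ((q.1.2 : K) *: ((iota q.1.1 : K) *: iota (q.1.1 + (q.2 : K) *: q.1.2)))).
split.
  move=> q [h1 h2]; exact (inv_key _ _ _ h1 h2).
have l11 : CkR (PM KK) KK (PV KK V0) (fun q => q.1.1) k :=
  CkR_lin k _ _ _ _ hP inM_K hPV (fun _ _ _ => erefl) (C0_pi11 inM_K).
have l12 : CkR (PM KK) KK (PV KK V0) (fun q => q.1.2) k :=
  CkR_lin k _ _ _ _ hP inM_K hPV (fun _ _ _ => erefl) (C0_pi12 inM_K).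
have l2 : CkR (PM KK) KK (PV KK V0) (fun q => q.2) k :=
  CkR_lin k _ _ _ _ hP inM_K hPV (fun _ _ _ => erefl) (C0_pi2 inM_K).
have c11 : CkR (PM KK) KK (PV KK V0) (fun q => iota q.1.1) k :=
  CkR_comp k _ _ _ (PV KK V0) V0 (fun q => q.1.1) iota hP inM_K inM_K hPV (units_open HD)
    (fun q hq => proj1 hq) l11 IH.
have ca : CkR (PM KK) KK (PV KK V0) (fun q => q.1.1 + (q.2 : K) *: q.1.2) k :=
  CkR_add k hP inM_K hPV l11 (CkR_scaleC k hP inM_K hPV l2 l12).
have c1a : CkR (PM KK) KK (PV KK V0) (fun q => iota (q.1.1 + (q.2 : K) *: q.1.2)) k :=
  CkR_comp k _ _ _ (PV KK V0) V0 _ iota hP inM_K inM_K hPV (units_open HD)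
    (fun q hq => proj2 hq) ca IH.
exact (CkR_neg k hP inM_K hPV (CkR_scaleC k hP inM_K hPV l12 (CkR_scaleC k hP inM_K hPV c11 c1a))).
Qed.


Lemma Loc k : forall A B (U : set (tcar A)) (f : tcar A -> tcar B) (I : Type)
  (Ui : I -> set (tcar A)), inM D A -> inM D B -> topen A U ->
  (forall i, topen A (Ui i)) -> \bigcup_i Ui i = U ->
  (forall i, CkR A B (Ui i) f k) -> CkR A B U f k.
Proof.
elim: k => [|k IH] A B U f I Ui hA hB hU hUi hcov hf.
  exact (C0_local HD hA hB hU hUi hcov hf).
have C0f : C0 D A B U f := C0_local HD hA hB hU hUi hcov (fun i => CkR_C0 _ (hf i)).
have fk : CkR A B U f k := IH A B U f I Ui hA hB hU hUi hcov (fun i => CkR_down (hf i)).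
have [G HG] := choice (fun i => proj2 (hf i)).
have hPM := inM_PM hA.
have hPVU := PV_open hA hU.
have hPVi : forall i, topen (PM A) (PV A (Ui i)) := fun i => PV_open hA (hUi i).
have sub : forall i x, Ui i x -> U x.
  by move=> i x hx; rewrite -hcov; exists i.
have agree0 : forall i j p, PV A (Ui i) p -> PV A (Ui j) p -> (p.2 : K) != 0 ->
    G i p = G j p.
  move=> i j p hi hj ht; apply: (scalerI ht) => /=.
  by rewrite -(proj1 (HG i)) // -(proj1 (HG j)).
have agree : forall i j p, PV A (Ui i) p -> PV A (Ui j) p -> G i p = G j p.
  move=> i j [[x v] s] hi hj.
  pose pr := fun r : tcar KK => ((((x, v) : tcar (tp A A)), r) : tcar (PM A)).
  have cpr : C0 D KK (PM A) setT pr := C0_pairr HD ((x, v) : tcar (tp A A)) (inM_tp hA hA) inM_K.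
  pose S := setT `&` pr @^-1` (PV A (Ui i) `&` PV A (Ui j)).
  have hS : topen KK S := preim_open inM_K hPM (topT inM_K) (topI hPM (hPVi i) (hPVi j)) cpr.
  have cprS : C0 D KK (PM A) S pr := C0_restr inM_K hPM (topT inM_K) hS (fun _ _ => Logic.I) cpr.
  have cGi : C0 D KK B S (fun r => G i (pr r)).
    have := C0_comp HD inM_K hPM hB hS (hPVi i) (fun r (hr : S r) => proj1 (proj2 hr)) cprS
      (CkR_C0 _ (proj2 (HG i))); exact.
  have cGj : C0 D KK B S (fun r => G j (pr r)).
    have := C0_comp HD inM_K hPM hB hS (hPVi j) (fun r (hr : S r) => proj2 (proj2 hr)) cprS
      (CkR_C0 _ (proj2 (HG j))); exact.
  have := C0_unique HD hB hS cGi cGj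
    (fun r (hr : S r) hr0 => agree0 i j (pr r) (proj1 (proj2 hr)) (proj2 (proj2 hr)) hr0) s.
  apply; split => //; split => //.
pose Q := fun p : tcar (PM A) =>
  ((p.2 : K)^-1) *: (f (p.1.1 + (p.2 : K) *: p.1.2) - f p.1.1).
pose g1 := fun p : tcar (PM A) =>
  match pselect (exists i, PV A (Ui i) p) with
  | left H => G (proj1_sig (cid H)) p
  | right _ => Q p
  end.
have g1_on : forall i p, PV A (Ui i) p -> g1 p = G i p.
  move=> i p hp; rewrite /g1; case: pselect => [H|N]; last by exfalso; apply: N; exists i.
  case: (cid H) => j hj /=; exact: agree.
have g1_R : forall p, (p.2 : K) != 0 -> g1 p = Q p.
  move=> p ht; rewrite /g1; case: pselect => [H|N] //.
  case: (cid H) => j hj /=.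
  by rewrite /Q (proj1 (HG j) p hj) scalerA mulVf // scale1r.
have cov0 : forall p, PV A U p -> (p.2 : K) = 0 -> exists i, PV A (Ui i) p.
  move=> p [hx _] h0.
  have : (\bigcup_i Ui i) p.1.1 by rewrite hcov.
  case=> i _ hi; exists i; split => //=.
  by rewrite h0 scale0r addr0.
split => //.
exists g1; split.
  move=> p hp.
  case: (pselect (exists i, PV A (Ui i) p)) => [[i hi]|N].
    rewrite (g1_on i p hi); exact: (proj1 (HG i)).
  have ht : (p.2 : K) != 0.
    apply/negP => /eqP h0; apply: N; exact: cov0.
  by rewrite (g1_R p ht) /Q scalerA mulfV // scale1r.
pose R := PV A U `&` (fun p : tcar (PM A) => p.2) @^-1` V0.
have hR : topen (PM A) R := preim_open hPM inM_K hPVU (units_open HD)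
  (C0_restr hPM inM_K (topT hPM) hPVU (fun _ _ => Logic.I) (C0_pi2 hA)).
pose Ui' := fun o : option I => match o with None => R | Some i => PV A (Ui i) end.
apply: (IH (PM A) B (PV A U) g1 (option I) Ui' hPM hB hPVU).
- by case => [i|] /=; [exact: hPVi | exact: hR].
- apply/seteqP; split => p.
    case=> o _; case: o => [i|] /= h; last exact: (proj1 h).
    by case: h => h1 h2; split; apply: (sub i).
  move=> hp; case: (eqVneq (p.2 : K) 0) => [h0|ht].
    have [i hi] := cov0 p hp h0; by exists (Some i).
  by exists None => //; split.
- case => [i|] /=.
    exact (CkR_ext k _ _ _ _ _ hPM hB (hPVi i) (fun p hp => esym (g1_on i p hp)) (proj2 (HG i))).
  have l11 : CkR (PM A) A R (fun q => q.1.1) k :=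
    CkR_lin k _ _ _ _ hPM hA hR (fun _ _ _ => erefl) (C0_pi11 hA).
  have l12 : CkR (PM A) A R (fun q => q.1.2) k :=
    CkR_lin k _ _ _ _ hPM hA hR (fun _ _ _ => erefl) (C0_pi12 hA).
  have l2 : CkR (PM A) KK R (fun q => q.2) k :=
    CkR_lin k _ _ _ _ hPM inM_K hR (fun _ _ _ => erefl) (C0_pi2 hA).
  have cinv : CkR (PM A) KK R (fun q => iota q.2) k :=
    CkR_comp k _ _ _ R V0 (fun q => q.2) iota hPM inM_K inM_K hR (units_open HD)
      (fun q hq => proj2 hq) l2 (CkR_inv k).
  have ca : CkR (PM A) A R (fun q => q.1.1 + (q.2 : K) *: q.1.2) k :=
    CkR_add k hPM hA hR l11 (CkR_scaleC k hPM hA hR l2 l12).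
  have cfa : CkR (PM A) B R (fun q => f (q.1.1 + (q.2 : K) *: q.1.2)) k :=
    CkR_comp k _ _ _ R U _ f hPM hA hB hR hU (fun q hq => proj2 (proj1 hq)) ca fk.
  have cf11 : CkR (PM A) B R (fun q => f q.1.1) k :=
    CkR_comp k _ _ _ R U _ f hPM hA hB hR hU (fun q hq => proj1 (proj1 hq)) l11 fk.
  have cQ : CkR (PM A) B R Q k :=
    CkR_scaleC k hPM hB hR cinv (CkR_add k hPM hB hR cfa (CkR_neg k hPM hB hR cf11)).
  exact (CkR_ext k _ _ _ _ _ hPM hB hR (fun p hp => esym (g1_R p (proj2 hp))) cQ).
Qed.


Local Notation itM := (itM K tauK D).
Local Notation itV := (itV K tauK D).

Fixpoint cM (A : TMod K) (j : nat) : tcar (itM A j.+1) -> tcar (itM (PM A) j) :=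
  match j return tcar (itM A j.+1) -> tcar (itM (PM A) j) with
  | 0 => fun p => p
  | j'.+1 => fun p => ((cM A j' p.1.1, cM A j' p.1.2), p.2)
  end.

Fixpoint dM (A : TMod K) (j : nat) : tcar (itM (PM A) j) -> tcar (itM A j.+1) :=
  match j return tcar (itM (PM A) j) -> tcar (itM A j.+1) with
  | 0 => fun p => p
  | j'.+1 => fun p => ((dM A j' p.1.1, dM A j' p.1.2), p.2)
  end.

Lemma cM_lin A j : forall x y (t : K), cM A j (x + t *: y) = cM A j x + t *: cM A j y.
Proof.
elim: j => [|j IH] x y t //.
apply: pair_eq; first apply: pair_eq.
- exact (IH x.1.1 y.1.1 t).
- exact (IH x.1.2 y.1.2 t).
- by [].
Qed.

Lemma dM_lin A j : forall x y (t : K), dM A j (x + t *: y) = dM A j x + t *: dM A j y.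
Proof.
elim: j => [|j IH] x y t //.
apply: pair_eq; first apply: pair_eq.
- exact (IH x.1.1 y.1.1 t).
- exact (IH x.1.2 y.1.2 t).
- by [].
Qed.

Lemma cM_dM A j : forall q, cM A j (dM A j q) = q.
Proof.
elim: j => [|j IH] q //.
by case: q => [[a b] c] /=; rewrite !IH.
Qed.

Lemma C0_cM A j : inM D A -> C0 D (itM A j.+1) (itM (PM A) j) setT (cM A j).
Proof.
move=> hA; elim: j => [|j IH].
  exact (C0_id HD (inM_it 1 hA) (topT (inM_it 1 hA))).
have h1 := inM_it j.+1 hA.
have h2 := inM_it j (inM_PM hA).
have hP := inM_PM h1.
have c11 := C0_compT hP h1 h2 (topT hP) (C0_pi11 h1) IH.
have c12 := C0_compT hP h1 h2 (topT hP) (C0_pi12 h1) IH.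
have := C0_pair hP (inM_tp h2 h2) inM_K (topT hP) (C0_pair hP h2 h2 (topT hP) c11 c12) (C0_pi2 h1).
exact.
Qed.

Lemma C0_dM A j : inM D A -> C0 D (itM (PM A) j) (itM A j.+1) setT (dM A j).
Proof.
move=> hA; elim: j => [|j IH].
  exact (C0_id HD (inM_it 1 hA) (topT (inM_it 1 hA))).
have h1 := inM_it j.+1 hA.
have h2 := inM_it j (inM_PM hA).
have hP := inM_PM h2.
have c11 := C0_compT hP h2 h1 (topT hP) (C0_pi11 h2) IH.
have c12 := C0_compT hP h2 h1 (topT hP) (C0_pi12 h2) IH.
have := C0_pair hP (inM_tp h1 h1) inM_K (topT hP) (C0_pair hP h1 h1 (topT hP) c11 c12) (C0_pi2 h2).
exact.
Qed.

Lemma itV_cM A V j : forall p, itV A V j.+1 p <-> itV (PM A) (PV A V) j (cM A j p).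
Proof.
elim: j => [|j IH] p; first by [].
split => [[h1 h2]|[h1 h2]]; split.
- exact (proj1 (IH _) h1).
- have := proj1 (IH _) h2; rewrite cM_lin; exact.
- exact (proj2 (IH _) h1).
- apply/IH; rewrite cM_lin; exact h2.
Qed.

Lemma itV_dM A V j q : itV (PM A) (PV A V) j q -> itV A V j.+1 (dM A j q).
Proof. by move=> h; apply/itV_cM; rewrite cM_dM. Qed.

Lemma isCk_CkR k : forall A B V g, inM D A -> inM D B -> topen A V ->
  isCk K tauK D A B V g k -> CkR A B V g k.
Proof.
elim: k => [|k IH] A B V g hA hB hV [gs [g0 hc hd]].
  exact (C0_ext HD hA hB hV (hc 0%N (leqnn 0)) g0).
split; first exact (C0_ext HD hA hB hV (hc 0%N isT) g0).
exists (gs 1%N); split.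
  move=> p hp.
  rewrite -(g0 _ (proj1 hp)) -(g0 _ (proj2 hp)).
  exact (hd 0%N isT p hp).
have hP := inM_PM hA.
have hPV := PV_open hA hV.
apply: (IH (PM A) B (PV A V) (gs 1%N) hP hB hPV).
exists (fun j q => gs j.+1 (dM A j q)); split.
- by [].
- move=> j hj.
  have := C0_comp HD (inM_it j hP) (inM_it j.+1 hA) hB (itV_open (PM A) (PV A V) j hP hPV) (itV_open A V j.+1 hA hV)
    (fun q hq => itV_dM A V j q hq) (C0_restr (inM_it j hP) (inM_it j.+1 hA) (topT (inM_it j hP))
       (itV_open (PM A) (PV A V) j hP hPV) (fun _ _ => Logic.I) (C0_dM A j hA)) (hc j.+1 hj).
  exact.
- move=> j hj q hq.
  rewrite dM_lin.
  exact (hd j.+1 hj (dM A j.+1 q) (itV_dM A V j.+1 q hq)).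
Qed.

Lemma CkR_isCk k : forall A B V g, inM D A -> inM D B -> topen A V ->
  CkR A B V g k -> isCk K tauK D A B V g k.
Proof.
elim: k => [|k IH] A B V g hA hB hV.
  move=> c.
  exists (fun j => match j return tcar (itM A j) -> tcar B with 0 => g | _ => fun _ => 0 end).
  split => //; by case.
move=> [c [g1 [ig r]]].
have hP := inM_PM hA.
have hPV := PV_open hA hV.
have [hs [h0 hc hd]] := IH _ _ _ _ hP hB hPV r.
exists (fun j => match j return tcar (itM A j) -> tcar B with
  | 0 => g | j'.+1 => fun p => hs j' (cM A j' p) end).
split => //.
- case => [|j] hj //.
  have := C0_comp HD (inM_it j.+1 hA) (inM_it j hP) hB (itV_open A V j.+1 hA hV) (itV_open (PM A) (PV A V) j hP hPV)
    (fun p hp => proj1 (itV_cM A V j p) hp)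
    (C0_restr (inM_it j.+1 hA) (inM_it j hP) (topT (inM_it j.+1 hA))
       (itV_open A V j.+1 hA hV) (fun _ _ => Logic.I) (C0_cM A j hA)) (hc j hj).
  exact.
- case => [|j] hj p hp.
    have -> : hs 0%N (cM A 0 p) = g1 p by exact: h0.
    exact: ig.
  rewrite /= cM_lin.
  exact (hd j hj (cM A j.+1 p) (proj1 (itV_cM A V j.+1 p) hp)).
Qed.

End Calc.

Local Close Scope ring_scope.

Theorem lemma4p9 (K : fieldType) (tauK : set (set K)) (D : C0data K)
  (HD : C0concept K tauK D) (E F : TMod K) (hE : inM D E) (hF : inM D F)
  (U : set (tcar E)) (hU : topen E U) (f : tcar E -> tcar F) (k : ext_nat)
  (I : Type) (Ui : I -> set (tcar E))
  (hUi : forall i, topen E (Ui i)) (hcov : \bigcup_i Ui i = U)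
  (hf : forall i, isC K tauK D E F (Ui i) f k) :
  isC K tauK D E F U f k.
Proof.
have main : forall n, (forall i, isCk K tauK D E F (Ui i) f n) -> isCk K tauK D E F U f n.
  move=> n h.
  apply: (CkR_isCk _ _ _ HD n E F U f hE hF hU).
  apply: (Loc _ _ _ HD n E F U f I Ui hE hF hU hUi hcov) => i.
  exact: (isCk_CkR _ _ _ HD n E F (Ui i) f hE hF (hUi i) (h i)).
case: k hf => [n|] hf /=.
  exact: main.
by move=> n; apply: main => i; exact: hf.
Qed.
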